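(* Let $q$ be an odd prime power, $n\ge 5$, and let $M$ be an $n\times n$ matrix with entries in $\mathbb{F}_q$. Then $0\in\mathrm{Num}'_0(M)_q$.
   Context: For $M=(m_{ij})$ with entries in $\mathbb{F}_q$ and $u=(x_1,\dots,x_n)\in\mathbb{F}_q^n$, with the Hermitian form $\langle u,v\rangle=\sum_i u_i^qv_i$ one has $\langle u,u\rangle=\sum_i x_i^2$ and $\langle u,Mu\rangle=\sum_{i,j}m_{ij}x_ix_j$. $\mathrm{Num}'_0(M)_q=\{\langle u,Mu\rangle: u\in\mathbb{F}_q^n\setminus\{0\},\ \langle u,u\rangle=0\}$. *)

(* Defs.v *)
From HB Require Import structures.
From mathcomp Require Import all_boot all_order all_algebra all_field.
Set Implicit Arguments. Unset Strict Implicit. Unset Printing Implicit Defensive.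
Import GRing.Theory.
Local Open Scope ring_scope.

(* The field F_q is an arbitrary finite field F, with q = #|F|. *)

Definition herm (F : finFieldType) (n : nat) (u v : 'cV[F]_n) : F :=
  \sum_(i < n) (u i 0) ^+ #|F| * v i 0.

Definition in_Num0' (F : finFieldType) (n : nat) (M : 'M[F]_n) (z : F) : Prop :=
  exists u : 'cV[F]_n, u != 0 /\ herm u u = 0 /\ herm u (M *m u) = z.

(* Main.v *)
Require Import Defs.
From mathcomp Require Import all_boot all_order all_algebra all_field.
From mathcomp Require Import mpoly.
From mathcomp Require Import zify.
Local Open Scope ring_scope.
Import GRing.Theory.
Set Implicit Arguments. Unset Strict Implicit. Unset Printing Implicit Defensive.

Lemma card_char0 (F : finFieldType) : (#|F|%:R : F) = 0.
Proof.
have E : \sum_(t : F) t = \sum_(t : F) (1 + t) := reindex_inj (addrI 1).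
move: E; rewrite big_split /= sumr_const cardT -cardE.
by move/eqP; rewrite -{1}[\sum_t t]add0r (inj_eq (addIr _)) eq_sym => /eqP.
Qed.

Lemma psum0 (F : finFieldType) k : (k < #|F|.-1)%N -> \sum_(t : F) t ^+ k = 0.
Proof.
move=> hk.
case: k hk => [|k] hk.
  by under eq_bigr do rewrite expr0; rewrite sumr_const cardT -cardE card_char0.
have [c /andP[cnz ck]|H] := pickP [pred c : F | (c != 0) && (c ^+ k.+1 != 1)]; last first.
  have Hr : all (root ('X^(k.+1) - 1)) (enum (predC1 (0 : F))).
    apply/allP => x; rewrite mem_enum /= => xnz.
    move: (H x) => /= /negbT; rewrite (negbTE (xnz : x != 0)) /= negbK => /eqP xk.
    by rewrite /root !hornerE xk subrr.
  have := max_poly_roots _ Hr (enum_uniq _).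
  rewrite size_Xn_sub_1 // -cardE cardC1.
  have -> : ('X^(k.+1) - 1 : {poly F}) != 0.
    by rewrite -size_poly_eq0 size_Xn_sub_1.
  move=> /(_ isT); move: hk; set q := #|F|.-1 => hk h; rewrite ltnS in h; move: (leq_trans hk h); by rewrite ltnn.
have E : \sum_(t : F) t ^+ k.+1 = \sum_(t : F) (c * t) ^+ k.+1 := reindex_inj (mulfI cnz).
move: E; under [X in _ = X -> _]eq_bigr do rewrite exprMn.
rewrite -mulr_sumr => /eqP; rewrite -subr_eq0 -{1}[\sum_t _]mul1r -mulrBl mulf_eq0 subr_eq0 eq_sym (negbTE ck) /=.
by move/eqP.
Qed.

Lemma sum_mono (F : finFieldType) n (m : 'X_{1..n}) :
  (mdeg m < n * #|F|.-1)%N -> \sum_(x : {ffun 'I_n -> F}) \prod_i x i ^+ m i = 0.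
Proof.
move=> hm.
rewrite -(bigA_distr_bigA (fun i (t : F) => t ^+ m i)) /=.
have [i /= hi|H] := pickP [pred i : 'I_n | (m i < #|F|.-1)%N].
  by rewrite (bigD1 i) //= psum0 // mul0r.
exfalso; move: hm; rewrite mdegE.
have : (\sum_(i < n) #|F|.-1 <= \sum_(i < n) m i)%N.
  by apply: leq_sum => i _; move: (H i) => /= /negbT; rewrite -leqNgt.
rewrite sum_nat_const card_ord => h1 h2; move: (leq_trans h2 h1); by rewrite ltnn.
Qed.

Lemma sum_meval (F : finFieldType) n (p : {mpoly F[n]}) :
  (msize p <= n * #|F|.-1)%N -> \sum_(x : {ffun 'I_n -> F}) p.@[x] = 0.
Proof.
move=> hp.
under eq_bigr do rewrite mevalE.
rewrite exchange_big /= big1_seq // => m /andP[_ hm].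
rewrite -mulr_sumr sum_mono ?mulr0 //.
exact: leq_trans (msize_mdeg_lt hm) hp.
Qed.


Lemma msizeMl (R : idomainType) n (p q : {mpoly R[n]}) :
  (msize (p * q) <= (msize p + msize q).-1)%N.
Proof.
have [->|pn] := eqVneq p 0; first by rewrite mul0r mmeasure0.
have [->|qn] := eqVneq q 0; first by rewrite mulr0 mmeasure0.
by rewrite msizeM.
Qed.

Lemma msizeXn (R : idomainType) n (p : {mpoly R[n]}) k :
  (msize (p ^+ k) <= (k * (msize p).-1).+1)%N.
Proof.
elim: k => [|k IH]; first by rewrite expr0 msize1.
rewrite exprS; apply: leq_trans (msizeMl _ _) _.
move: IH; set a := msize (p ^+ k); set s := msize p => IH.
case: s IH => [|s] IH /=; lia.
Qed.

Lemma msize1m (R : idomainType) n (p : {mpoly R[n]}) :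
  (msize (1 - p) <= maxn 1 (msize p))%N.
Proof. by apply: leq_trans (mmeasureD_le _ _ _) _; rewrite mmeasureN msize1. Qed.

Lemma msizeXU (R : idomainType) n (i : 'I_n) : msize ('X_i : {mpoly R[n]}) = 2%N.
Proof. by rewrite msizeX mdeg1. Qed.

Theorem corollary3 (F : finFieldType) (n : nat) (M : 'M[F]_n) :
  odd #|F| -> (5 <= n)%N -> in_Num0' M 0.
Proof.
move=> _ n5.
have q2 : (1 < #|F|)%N := finNzRing_gt1 F.
set k := #|F|.-1.
have k1 : (0 < k)%N by rewrite /k; lia.
pose P1 : {mpoly F[n]} := \sum_(i < n) 'X_i * 'X_i.
pose P2 : {mpoly F[n]} := \sum_(i < n) 'X_i * \sum_(j < n) M i j *: 'X_j.
pose P := (1 - P1 ^+ k) * (1 - P2 ^+ k).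
have s1 : (msize P1 <= 3)%N.
  apply: leq_trans (mmeasure_sum _ _ _ _) _; apply/bigmax_leqP_seq => i _ _.
  by apply: leq_trans (msizeMl _ _) _; rewrite !msizeXU.
have s2 : (msize P2 <= 3)%N.
  apply: leq_trans (mmeasure_sum _ _ _ _) _; apply/bigmax_leqP_seq => i _ _.
  apply: leq_trans (msizeMl _ _) _; rewrite !msizeXU.
  suff H : (msize (\sum_(j < n) M i j *: ('X_j : {mpoly F[n]})) <= 2)%N by rewrite add2n.
  apply: leq_trans (mmeasure_sum _ _ _ _) _; apply/bigmax_leqP_seq => j _ _.
  by apply: leq_trans (msizeZ_le _ _) _; rewrite msizeXU.
have sP : (msize P <= n * k)%N.
  apply: leq_trans (msizeMl _ _) _.
  have := msizeXn P1 k; have := msizeXn P2 k.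
  have := msize1m (P1 ^+ k); have := msize1m (P2 ^+ k).
  move: s1 s2; set a := msize P1; set b := msize P2.
  set c := msize (P1 ^+ k); set d := msize (P2 ^+ k).
  set e := msize (1 - P1 ^+ k); set f := msize (1 - P2 ^+ k).
  move=> *; nia.
have key := sum_meval sP.
pose Q1 (x : {ffun 'I_n -> F}) := \sum_(i < n) x i * x i.
pose Q2 (x : {ffun 'I_n -> F}) := \sum_(i < n) x i * \sum_(j < n) M i j * x j.
have ev : forall x : {ffun 'I_n -> F}, P.@[x] = (1 - Q1 x ^+ k) * (1 - Q2 x ^+ k).
  move=> x; rewrite /P mevalM !mevalB !meval1 !rmorphXn /P1 /P2 !raddf_sum /Q1 /Q2.
  congr ((1 - _ ^+ k) * (1 - _ ^+ k)); apply: eq_bigr => i _.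
    by rewrite /= mevalM !mevalXU.
  rewrite /= mevalM mevalXU raddf_sum; congr (_ * _); apply: eq_bigr => j _.
  by rewrite /= mevalZ mevalXU.
have fz : forall y : F, y != 0 -> y ^+ k = 1.
  move=> y yn; apply: (mulIf yn); rewrite mul1r -exprSr /k prednK ?expf_card //; lia.
have z0 : (0 : F) ^+ k = 0 by rewrite expr0n eqn0Ngt k1.
have [x /= /andP[/andP[xn h1] h2]|H] := pickP [pred x : {ffun 'I_n -> F} | (x != 0) && (Q1 x == 0) && (Q2 x == 0)]; last first.
  exfalso; move: key; rewrite (bigD1 (0 : {ffun 'I_n -> F})) //= big1.
    rewrite ev /Q1 /Q2 !big1 ?z0 ?subr0 ?mulr1 ?addr0; first by move/eqP; rewrite oner_eq0.
      by move=> i _; rewrite ffunE mul0r.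
    by move=> i _; rewrite ffunE mul0r.
  move=> x xn; rewrite ev; move: (H x) => /= /negbT; rewrite xn /= negb_and.
  by case/orP => /fz ->; rewrite subrr ?mul0r ?mulr0.
exists (\col_i x i); split.
  apply/eqP => u0; move/eqP: xn; apply; apply/ffunP => i.
  by move/matrixP: u0 => /(_ i 0); rewrite !mxE ffunE.
split.
  apply: etrans (eqP h1); rewrite /herm /Q1; apply: eq_bigr => i _; by rewrite !mxE expf_card.
apply: etrans (eqP h2); rewrite /herm /Q2; apply: eq_bigr => i _; rewrite !mxE expf_card; congr (_ * _).
by apply: eq_bigr => j _; rewrite !mxE.
Qed.
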